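(* Let $\mathcal{L}$ be a finite relational language, $K$ a Fraïssé class of finite $\mathcal{L}$-structures with the Strong Amalgamation Property, and $T$ the theory of its Fraïssé limit. If $T$ is geometric and satisfies $\mathrm{acl}(X)=X$ for every subset $X$ of every model of $T$, then $T_{pfc}$ is geometric and also satisfies $\mathrm{acl}(X)=X$ for every subset $X$ of every model of $T_{pfc}$.
   Context: A (possibly many-sorted) complete theory is geometric if it eliminates $\exists^\infty$ (for each formula $\varphi(x,y)$ with $x$ a single variable of some sort, there is $N$ such that each instance $\varphi(x,b)$ is infinite or has at most $N$ solutions) and acl satisfies exchange. $K$ has SAP if for all $A,B,C\in K$ and embeddings $e:A\to B$, $f:A\to C$ there are $D\in K$ and embeddings $g:B\to D$, $h:C\to D$ with $ge=hf$ and $\mathrm{im}(g)\cap\mathrm{im}(h)=\mathrm{im}(ge)$. If $\mathcal{L}=(R_i:i<k)$ with $R_i$ of arity $n_i$, $\mathcal{L}_{pfc}$ is the two-sorted language with sorts $O,P$ and relation symbols $R^i_x(x,y_1,\dots,y_{n_i})$, $x$ of sort $P$, $y_j$ of sort $O$. For an $\mathcal{L}_{pfc}$-structure $(A,B)$ and $b\in B$, $A_b$ is the $\mathcal{L}$-structure on $A$ with $R_i$ interpreted as $\{\bar y:R^i(b,\bar y)\}$. $K_{pfc}$ is the class of finite $\mathcal{L}_{pfc}$-structures $(A,B)$ with each $A_b$ isomorphic to a member of $K$; it is a SAP Fraïssé class, and $T_{pfc}$ is the theory of its Fraïssé limit. *)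

(* Defs.v *)
From Stdlib Require Import List Arith PeanoNat.
Import ListNotations.
Set Implicit Arguments.

Record signature := Signature {
  sort : Type;
  rel : Type;
  rsorts : rel -> list sort
}.

(* A many-sorted structure is presented as the disjoint union of its sorts:
   a carrier [dom] with a sort map [srt]. *)
Record structure (S : signature) := Structure {
  dom : Type;
  srt : dom -> sort S;
  interp : rel S -> list dom -> Prop
}.
Arguments dom {S} _.
Arguments srt {S} _ _.
Arguments interp {S} _ _ _.

Definition wellsorted {S} (M : structure S) : Prop :=
  forall r l, interp M r l -> map (srt M) l = rsorts S r.

Definition finite_type (T : Type) : Prop := exists l : list T, forall x, In x l.
Definition finite_set {T : Type} (P : T -> Prop) : Prop :=
  exists l : list T, forall x, P x -> In x l.
Definition at_most {T : Type} (n : nat) (P : T -> Prop) : Prop :=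
  exists l : list T, length l <= n /\ forall x, P x -> In x l.

Definition finite_str {S} (M : structure S) : Prop := finite_type (dom M).

Definition is_emb {S} (A B : structure S) (f : dom A -> dom B) : Prop :=
  (forall x y, f x = f y -> x = y) /\
  (forall a, srt B (f a) = srt A a) /\
  (forall r l, interp A r l <-> interp B r (map f l)).

Definition embeds {S} (A B : structure S) : Prop := exists f, is_emb A B f.

Definition str_class (S : signature) := structure S -> Prop.

Definition HP {S} (K : str_class S) : Prop :=
  forall A B, embeds A B -> K B -> K A.
Definition JEP {S} (K : str_class S) : Prop :=
  forall A B, K A -> K B -> exists C, K C /\ embeds A C /\ embeds B C.
Definition AP {S} (K : str_class S) : Prop :=
  forall (A B C : structure S) (e : dom A -> dom B) (f : dom A -> dom C),
    K A -> K B -> K C -> is_emb A B e -> is_emb A C f ->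
    exists (D : structure S) (g : dom B -> dom D) (h : dom C -> dom D),
      K D /\ is_emb B D g /\ is_emb C D h /\ (forall a, g (e a) = h (f a)).
Definition SAP {S} (K : str_class S) : Prop :=
  forall (A B C : structure S) (e : dom A -> dom B) (f : dom A -> dom C),
    K A -> K B -> K C -> is_emb A B e -> is_emb A C f ->
    exists (D : structure S) (g : dom B -> dom D) (h : dom C -> dom D),
      K D /\ is_emb B D g /\ is_emb C D h /\ (forall a, g (e a) = h (f a)) /\
      (forall d, (exists b, g b = d) -> (exists c, h c = d) ->
                 exists a, g (e a) = d).

(* Fraisse class of finite S-structures (closure under isomorphism is
   included in HP, since isomorphisms are embeddings; countably many
   isomorphism types is automatic for a finite relational language). *)
Definition fraisse_class {S} (K : str_class S) : Prop :=
  (exists A, K A) /\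
  (forall A, K A -> finite_str A /\ wellsorted A) /\
  HP K /\ JEP K /\ AP K.

Definition fraisse_limit {S} (K : str_class S) (M : structure S) : Prop :=
  wellsorted M /\
  (exists c : dom M -> nat, forall x y, c x = c y -> x = y) /\
  (forall A, K A <-> (finite_str A /\ wellsorted A /\ embeds A M)) /\
  (forall (A : structure S) (f g : dom A -> dom M),
     finite_str A -> is_emb A M f -> is_emb A M g ->
     exists h : dom M -> dom M,
       is_emb M M h /\ (forall y, exists x, h x = y) /\
       forall a, h (f a) = g a).

Inductive formula (S : signature) : Type :=
| FFalse : formula S
| FEq : nat -> nat -> formula S
| FRel : rel S -> list nat -> formula S
| FNot : formula S -> formula S
| FAnd : formula S -> formula S -> formula S
| FEx : sort S -> nat -> formula S -> formula S.
Arguments FFalse {S}. Arguments FEq {S} _ _. Arguments FRel {S} _ _. Arguments FNot {S} _. Arguments FAnd {S} _ _. Arguments FEx {S} _ _ _.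

Fixpoint fv {S} (phi : formula S) : list nat :=
  match phi with
  | FFalse => []
  | FEq i j => [i; j]
  | FRel _ l => l
  | FNot p => fv p
  | FAnd p q => fv p ++ fv q
  | FEx _ i p => filter (fun j => negb (Nat.eqb j i)) (fv p)
  end.

Definition closed {S} (phi : formula S) : Prop := fv phi = [].

Definition upd {T : Type} (v : nat -> T) (i : nat) (a : T) : nat -> T :=
  fun j => if Nat.eqb j i then a else v j.

Fixpoint sat {S} (M : structure S) (v : nat -> dom M) (phi : formula S) : Prop :=
  match phi with
  | FFalse => False
  | FEq i j => v i = v j
  | FRel r l => interp M r (map v l)
  | FNot p => ~ sat M v p
  | FAnd p q => sat M v p /\ sat M v q
  | FEx s i p => exists a, srt M a = s /\ sat M (upd v i a) p
  end.

Definition holds {S} (M : structure S) (phi : formula S) : Prop :=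
  forall v, sat M v phi.

(* N is a model of T = Th(M) (T is complete). *)
Definition model_of_Th {S} (M N : structure S) : Prop :=
  wellsorted N /\ inhabited (dom N) /\
  (forall phi, closed phi -> (holds M phi <-> holds N phi)).

Definition acl {S} (N : structure S) (X : dom N -> Prop) (a : dom N) : Prop :=
  exists (phi : formula S) (x : nat) (v : nat -> dom N),
    (forall j, In j (fv phi) -> j <> x -> X (v j)) /\
    sat N (upd v x a) phi /\
    finite_set (fun c => srt N c = srt N a /\ sat N (upd v x c) phi).

Definition elim_exists_infty {S} (M : structure S) : Prop :=
  forall (phi : formula S) (x : nat) (s : sort S),
  exists n : nat,
    forall N, model_of_Th M N -> forall v : nat -> dom N,
      let sol := fun c => srt N c = s /\ sat N (upd v x c) phi in
      ~ finite_set sol \/ at_most n sol.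

Definition acl_exchange {S} (M : structure S) : Prop :=
  forall N, model_of_Th M N ->
  forall (X : dom N -> Prop) (a b : dom N),
    acl N (fun y => X y \/ y = b) a -> ~ acl N X a ->
    acl N (fun y => X y \/ y = a) b.

Definition geometric {S} (M : structure S) : Prop :=
  elim_exists_infty M /\ acl_exchange M.

Definition trivial_acl {S} (M : structure S) : Prop :=
  forall N, model_of_Th M N ->
  forall (X : dom N -> Prop) (a : dom N), acl N X a -> X a.

(* ar = [n_0; ...; n_(k-1)], the arities of R_0, ..., R_(k-1) *)
Definition Lrel (ar : list nat) : Type := { i : nat | i < length ar }.

Definition Lsig (ar : list nat) : signature :=
  {| sort := unit; rel := Lrel ar;
     rsorts := fun r => repeat tt (nth (proj1_sig r) ar 0) |}.

Inductive pfc_sort : Type := SO | SP.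

(* R^i_x(x, y_1, ..., y_{n_i}) with x of sort P, y_j of sort O *)
Definition Lpfc (ar : list nat) : signature :=
  {| sort := pfc_sort; rel := Lrel ar;
     rsorts := fun r => SP :: repeat SO (nth (proj1_sig r) ar 0) |}.

(* A_b: the L-structure on the O-sort with R_i = { ybar : R^i(b, ybar) } *)
Definition fiber {ar} (N : structure (Lpfc ar)) (b : dom N) :
  structure (Lsig ar) :=
  @Structure (Lsig ar) { a : dom N | srt N a = SO }
     (fun _ => (tt : sort (Lsig ar)))
     (fun r l => interp N r (b :: map (@proj1_sig _ _) l)).

Definition K_pfc {ar} (K : str_class (Lsig ar)) : str_class (Lpfc ar) :=
  fun N => finite_str N /\ wellsorted N /\
           forall b : dom N, srt N b = SP -> exists A, K A /\
             exists f, is_emb (fiber N b) A f /\ (forall y, exists x, f x = y).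

(* Main.v *)
Require Import Defs.
From Stdlib Require Import List Arith PeanoNat Lia Classical ClassicalEpsilon FunctionalExtensionality ProofIrrelevance.
Import ListNotations.
Set Implicit Arguments.

Lemma sat_ext {S} (M : structure S) (p : formula S) : forall v w,
  (forall j, In j (fv p) -> v j = w j) -> (sat M v p <-> sat M w p).
Proof.
  induction p as [| i j | r l | p IH | p1 IH1 p2 IH2 | s i p IH]; intros v w H; simpl in *.
  - tauto.
  - rewrite (H i) by auto. rewrite (H j) by auto. tauto.
  - rewrite (map_ext_in v w l) by auto. tauto.
  - rewrite (IH v w H); tauto.
  - rewrite (IH1 v w), (IH2 v w) by (intros; apply H; apply in_or_app; auto). tauto.
  - assert (E : forall a, sat M (upd v i a) p <-> sat M (upd w i a) p).
    { intro a. apply IH. intros j Hj; unfold upd; destruct (Nat.eqb j i) eqn:E; auto.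
      apply H. apply filter_In. rewrite E. auto. }
    split; intros [a [Ha Hs]]; exists a; split; auto; apply E; auto.
Qed.

Lemma upd_comp {T U} (h : T -> U) (v : nat -> T) i a :
  (fun j => h (upd v i a j)) = upd (fun j => h (v j)) i (h a).
Proof. extensionality j. unfold upd. destruct (Nat.eqb j i); auto. Qed.

Lemma sat_aut {S} (M : structure S) h : is_emb M M h -> (forall y, exists x, h x = y) ->
  forall p v, sat M v p <-> sat M (fun j => h (v j)) p.
Proof.
  intros [Hinj [Hsrt Hrel]] Hsurj p. induction p as [| i j | r l | p IH | p1 IH1 p2 IH2 | s i p IH]; intros v; simpl.
  - tauto.
  - split; intro E; [congruence | auto].
  - rewrite Hrel, map_map. tauto.
  - rewrite IH; tauto.
  - rewrite IH1, IH2; tauto.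
  - split.
    + intros [a [Ha Hs]]. exists (h a). split; [rewrite Hsrt; auto|].
      apply IH in Hs. rewrite upd_comp in Hs. exact Hs.
    + intros [b [Hb Hs]]. destruct (Hsurj b) as [a <-]. exists a. split; [rewrite <- Hsrt; auto|].
      apply IH. rewrite upd_comp. exact Hs.
Qed.

Fixpoint exs {S} (L : list (sort S * nat)) (p : formula S) : formula S :=
  match L with [] => p | (s, i) :: L' => FEx s i (exs L' p) end.

Definition upds {T} (v : nat -> T) (L : list nat) (u : nat -> T) : nat -> T :=
  fun j => if existsb (Nat.eqb j) L then u j else v j.

Lemma exs_intro {S} (M : structure S) L p u : (forall s i, In (s, i) L -> srt M (u i) = s) ->
  forall v, sat M (upds v (map snd L) u) p -> sat M v (exs L p).
Proof.
  induction L as [|[s i] L IH]; intros Hs v H; simpl.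
  - exact H.
  - exists (u i). split; [apply Hs; left; auto|]. apply IH; [intros; apply Hs; right; auto|].
    replace (upds (upd v i (u i)) (map snd L) u) with (upds v (map snd ((s, i) :: L)) u); auto.
    extensionality j. unfold upds, upd; simpl. destruct (Nat.eqb j i) eqn:E; simpl;
    destruct (existsb (Nat.eqb j) (map snd L)); auto; apply Nat.eqb_eq in E; subst; auto.
Qed.

Lemma exs_elim {S} (M : structure S) L p : forall v, sat M v (exs L p) -> exists w, sat M w p.
Proof.
  induction L as [|[s i] L IH]; simpl; intros v H; eauto.
  destruct H as [a [_ H]]; eauto.
Qed.

Lemma fv_exs {S} L (p : formula S) j : In j (fv (exs L p)) -> In j (fv p) /\ ~ In j (map snd L).
Proof.
  induction L as [|[s i] L IH]; simpl; auto. intro H.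
  apply filter_In in H as [H1 H2]. apply IH in H1 as [H1 H3]. split; auto.
  intros [->|H]; auto. rewrite Nat.eqb_refl in H2. discriminate.
Qed.

Definition bigAnd {S} (l : list (formula S)) : formula S := fold_right FAnd (FNot FFalse) l.

Lemma sat_bigAnd {S} (M : structure S) v l : sat M v (bigAnd l) <-> Forall (sat M v) l.
Proof.
  induction l; simpl.
  - split; auto.
  - rewrite Forall_cons_iff, IHl. tauto.
Qed.

Lemma fv_bigAnd {S} (l : list (formula S)) j : In j (fv (bigAnd l)) -> exists f, In f l /\ In j (fv f).
Proof.
  induction l; simpl; [tauto|]. intro H. apply in_app_or in H as [H|H]; eauto.
  destruct (IHl H) as [f [? ?]]; eauto.
Qed.

Lemma acl_self {S} (N : structure S) (X : dom N -> Prop) a : X a -> acl N X a.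
Proof.
  intro H. exists (FEq 0 1), 0, (fun _ => a). split; [|split].
  - simpl. intros j [<-|[<-|[]]] Hj; [lia| auto].
  - simpl. unfold upd. simpl. auto.
  - exists [a]. intros c [_ Hc]. simpl in Hc. unfold upd in Hc; simpl in Hc. left; auto.
Qed.

Definition NoAlg {S} (M : structure S) := forall (ys : list (dom M)) a (l : list (dom M)),
  ~ In a ys -> exists h, is_emb M M h /\ (forall y, exists x, h x = y) /\
     (forall y, In y ys -> h y = y) /\ ~ In (h a) l.

Lemma fold_max_ge l x : x <= fold_right max x l /\ forall j, In j l -> j <= fold_right max x l.
Proof. induction l; simpl; [split; [lia|tauto]|]. destruct IHl as [H1 H2]. split; [lia|].
  intros j [<-|H]; [lia|]. specialize (H2 j H); lia. Qed.

Lemma upd_same {T} (v : nat -> T) i a : upd v i a i = a.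
Proof. unfold upd. rewrite Nat.eqb_refl; auto. Qed.
Lemma upd_other {T} (v : nat -> T) i a j : j <> i -> upd v i a j = v j.
Proof. intro H. unfold upd. apply Nat.eqb_neq in H. rewrite H; auto. Qed.

Lemma upds_in {T} (v u : nat -> T) L j : In j L -> upds v L u j = u j.
Proof. intro H. unfold upds. replace (existsb (Nat.eqb j) L) with true; auto.
  symmetry. apply existsb_exists. exists j. rewrite Nat.eqb_refl; auto. Qed.

Lemma upds_nin {T} (v u : nat -> T) L j : ~ In j L -> upds v L u j = v j.
Proof. intro H. unfold upds. destruct (existsb (Nat.eqb j) L) eqn:E; auto.
  apply existsb_exists in E as [k [Hk E]]. apply Nat.eqb_eq in E; subst; contradiction. Qed.

Lemma trivial_from_noalg {Sg} (Mp : structure Sg) : NoAlg Mp -> trivial_acl Mp.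
Proof.
  intros HN N [HwN [Hinh Hth]] X a [phi [x [v [Hpar [Hsat [l Hl]]]]]].
  apply NNPP; intro HXa.
  set (J := filter (fun j => negb (Nat.eqb j x)) (fv phi)).
  assert (HJ : forall j, In j J <-> In j (fv phi) /\ j <> x).
  { intro j. unfold J. rewrite filter_In. destruct (Nat.eqb j x) eqn:E; simpl.
    - apply Nat.eqb_eq in E. split; intros [? ?]; [discriminate| contradiction].
    - apply Nat.eqb_neq in E. tauto. }
  set (base := S (fold_right max x (fv phi))).
  destruct (fold_max_ge (fv phi) x) as [Hbx Hbj].
  assert (Hxb : x < base) by (unfold base; lia).
  assert (HJb : forall j, In j (fv phi) -> j < base) by (intros j Hj; specialize (Hbj j Hj); unfold base; lia).
  set (zs := map (fun k => base + k) (seq 0 (length l))).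
  assert (Hzs : forall z, In z zs <-> exists k, z = base + k /\ k < length l).
  { intro z. unfold zs. rewrite in_map_iff. split.
    - intros [k [<- Hk]]. apply in_seq in Hk. exists k; split; auto; lia.
    - intros [k [-> Hk]]. exists k; split; auto. apply in_seq; lia. }
  set (s := srt N a).
  set (L := map (fun j => (srt N (v j), j)) J ++ map (fun z => (s, z)) zs).
  assert (HL : map snd L = J ++ zs).
  { unfold L. rewrite map_app, !map_map. simpl. rewrite !map_id. auto. }
  set (A := FAnd (bigAnd (map (fun j => FNot (FEq x j)) J)) phi).
  set (B := FEx s x (FAnd phi (bigAnd (map (fun z => FNot (FEq x z)) zs)))).
  set (sigma := FNot (exs L (FEx s x (FAnd A (FNot B))))).
  assert (Hcl : closed sigma).
  { unfold closed, sigma. simpl.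
    assert (H : forall j, ~ In j (fv (exs L (FEx s x (FAnd A (FNot B)))))).
    { intros j Hj. apply fv_exs in Hj as [Hj Hn]. rewrite HL in Hn.
      simpl in Hj. apply filter_In in Hj as [Hj Hjx].
      assert (Hjx' : j <> x) by (intro E; subst; rewrite Nat.eqb_refl in Hjx; discriminate).
      apply Hn. apply in_or_app. apply in_app_or in Hj as [Hj|Hj].
      - unfold A in Hj. simpl in Hj. apply in_app_or in Hj as [Hj|Hj].
        + apply fv_bigAnd in Hj as [f [Hf Hj]]. apply in_map_iff in Hf as [j' [<- Hj']].
          simpl in Hj. destruct Hj as [E|[E|[]]]; subst; [contradiction|left; auto].
        + left. apply HJ; auto.
      - unfold B in Hj. simpl in Hj. apply filter_In in Hj as [Hj _].
        apply in_app_or in Hj as [Hj|Hj].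
        + left. apply HJ; auto.
        + apply fv_bigAnd in Hj as [f [Hf Hj]]. apply in_map_iff in Hf as [z [<- Hz]].
          simpl in Hj. destruct Hj as [E|[E|[]]]; subst; [contradiction|right; auto]. }
    destruct (fv (exs L (FEx s x (FAnd A (FNot B))))) as [|j ?]; auto. exfalso; apply (H j); left; auto. }
  assert (HMp : holds Mp sigma).
  { intros w Hs. apply exs_elim in Hs as [W [c0 [Hc0 [HA HnB]]]].
    set (W0 := upd W x c0) in *.
    assert (HW0x : W0 x = c0) by (unfold W0, upd; rewrite Nat.eqb_refl; auto).
    destruct HA as [HA1 HA2]. apply sat_bigAnd in HA1. rewrite Forall_map in HA1.
    rewrite Forall_forall in HA1. simpl in HA1.
    apply HnB.
    destruct (HN (map W0 J) c0 (map W0 zs)) as [h [Hh [Hhs [Hfix Hnl]]]].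
    { intro Hin. apply in_map_iff in Hin as [j [Hj Hjin]]. apply (HA1 j Hjin). congruence. }
    exists (h c0). split.
    { destruct Hh as [_ [Hsrt _]]. rewrite Hsrt. auto. }
    split.
    - apply (sat_aut Hh Hhs) in HA2. revert HA2. apply sat_ext.
      intros j Hj. unfold upd. destruct (Nat.eqb j x) eqn:E.
      + apply Nat.eqb_eq in E. rewrite E, HW0x; auto.
      + apply Nat.eqb_neq in E. symmetry; apply Hfix. apply in_map. apply HJ; auto.
    - apply sat_bigAnd. rewrite Forall_map, Forall_forall. intros z Hz. simpl.
      unfold upd at 1. rewrite Nat.eqb_refl.
      assert (Hzx : z <> x) by (apply Hzs in Hz as [k [-> _]]; lia).
      unfold upd. apply Nat.eqb_neq in Hzx. rewrite Hzx. intro E. apply Hnl. rewrite E.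
      apply in_map; auto. }
  apply (Hth sigma Hcl) in HMp. specialize (HMp v). apply HMp. clear HMp.
  set (zval := fun k => let e := nth k l a in
         if excluded_middle_informative (srt N e = s) then e else a).
  assert (Hzval : forall k, srt N (zval k) = s).
  { intro k. unfold zval. destruct (excluded_middle_informative _); auto. }
  set (u := fun j => if Nat.leb base j then zval (j - base) else v j).
  apply (@exs_intro _ N L _ u).
  { intros s' i Hi. unfold L in Hi. apply in_app_or in Hi as [Hi|Hi]; apply in_map_iff in Hi as [j [E Hj]];
    inversion E; subst; clear E.
    - apply HJ in Hj as [Hj _]. specialize (HJb _ Hj). unfold u.
      replace (Nat.leb base i) with false by (symmetry; apply Nat.leb_gt; lia). auto.
    - apply Hzs in Hj as [k [-> Hk]]. unfold u. rewrite (proj2 (Nat.leb_le _ _)) by lia. apply Hzval. }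
  set (W := upds v (map snd L) u).
  exists a. split; auto.
  set (W0 := upd W x a).
  assert (HW0J : forall j, In j J -> W0 j = v j).
  { intros j Hj. pose proof Hj as Hj'. apply HJ in Hj as [Hj Hjx]. unfold W0, upd.
    rewrite (proj2 (Nat.eqb_neq _ _) Hjx). unfold W. rewrite upds_in by (rewrite HL; apply in_or_app; auto).
    unfold u. specialize (HJb _ Hj). rewrite (proj2 (Nat.leb_gt _ _)) by lia. auto. }
  assert (HW0z : forall k, k < length l -> W0 (base + k) = zval k).
  { intros k Hk. unfold W0, upd. rewrite (proj2 (Nat.eqb_neq _ _)) by lia.
    unfold W. rewrite upds_in by (rewrite HL; apply in_or_app; right; apply Hzs; eauto).
    unfold u. rewrite (proj2 (Nat.leb_le _ _)) by lia. f_equal; lia. }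
  assert (HW0x : W0 x = a) by (unfold W0, upd; rewrite Nat.eqb_refl; auto).
  split.
  - split.
    + apply sat_bigAnd. rewrite Forall_map, Forall_forall. intros j Hj. simpl.
      rewrite HW0x, HW0J by auto. intro E. apply HXa. rewrite E.
      apply HJ in Hj as [Hj Hjx]. apply Hpar; auto.
    + revert Hsat. apply sat_ext. intros j Hj. unfold upd at 1. destruct (Nat.eqb j x) eqn:E.
      * apply Nat.eqb_eq in E. rewrite E, HW0x; auto.
      * apply Nat.eqb_neq in E. rewrite HW0J; auto. apply HJ; auto.
  - intros [c [Hc [Hphi Hz]]].
    assert (Hcl' : In c l).
    { apply Hl. split; auto. revert Hphi. apply sat_ext. intros j Hj. unfold upd.
      destruct (Nat.eqb j x) eqn:E; auto. apply Nat.eqb_neq in E. symmetry; apply HW0J. apply HJ; auto. }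
    apply In_nth with (d := a) in Hcl' as [k [Hk Hkc]].
    apply sat_bigAnd in Hz. rewrite Forall_map, Forall_forall in Hz.
    apply (Hz (base + k)); [apply Hzs; eauto|].
    change (upd W0 x c x = upd W0 x c (base + k)).
    rewrite upd_same, upd_other by lia. rewrite HW0z by auto.
    unfold zval. rewrite Hkc.
    destruct (excluded_middle_informative _) as [_|n]; [auto|contradiction].
Qed.

Lemma emb_comp {S} (A B C : structure S) f g : is_emb A B f -> is_emb B C g -> is_emb A C (fun x => g (f x)).
Proof. intros [i1 [s1 r1]] [i2 [s2 r2]]. split; [|split].
 - intros x y H; auto.
 - intro a; rewrite s2, s1; auto.
 - intros r l. rewrite r1, r2, map_map. tauto. Qed.

Lemma emb_id {S} (A : structure S) : is_emb A A (fun x => x).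
Proof. split; [|split]; auto. intros r l. rewrite map_id. tauto. Qed.

Definition subT {S} (M : structure S) (l : list (dom M)) : structure S :=
  @Structure S {y | In y l} (fun y => srt M (proj1_sig y)) (fun r xs => interp M r (map (@proj1_sig _ _) xs)).

Lemma subT_emb {S} (M : structure S) l : is_emb (subT M l) M (@proj1_sig _ _).
Proof. split; [|split].
  - intros [x hx] [y hy] H; simpl in H; subst. f_equal; apply proof_irrelevance.
  - auto.
  - simpl. tauto.
Qed.

Lemma finite_sig (T : Type) (P : T -> Prop) (l : list T) : (forall x, P x -> In x l) -> finite_type {x | P x}.
Proof.
  intro H. exists (flat_map (fun x => match excluded_middle_informative (P x) with
     left h => [exist P x h] | right _ => [] end) l).
  intros [x hx]. apply in_flat_map. exists x. split; auto.
  destruct (excluded_middle_informative (P x)) as [h|n]; [|contradiction]. left. f_equal; apply proof_irrelevance.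
Qed.

Lemma subT_finite {S} (M : structure S) l : finite_str (subT M l).
Proof. apply (finite_sig (fun y => In y l) l); auto. Qed.

Lemma subT_ws {S} (M : structure S) l : wellsorted M -> wellsorted (subT M l).
Proof. intros H r xs Hr. simpl in *. apply H in Hr. rewrite map_map in Hr. auto. Qed.

Definition NoAlg2 {S} (M : structure S) := forall (ys : list (dom M)) a,
  ~ In a ys -> exists h, is_emb M M h /\ (forall y, exists x, h x = y) /\
     (forall y, In y ys -> h y = y) /\ ~ In (h a) (a :: ys).

Lemma remove_ex {T} (l : list T) a : exists l', forall y, In y l' <-> In y l /\ y <> a.
Proof.
  induction l as [|b l [l' IH]]; [exists []; simpl; tauto|].
  destruct (excluded_middle_informative (b = a)) as [E|E].
  - exists l'. intro y. rewrite IH. simpl. split; [tauto|]. intros [[<-|H] H']; [contradiction|auto].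
  - exists (b :: l'). intro y. simpl. rewrite IH. split; [intros [<-|H]; tauto|]. intros [[<-|H] H']; auto.
Qed.

Lemma NoAlg_from2 {S} (M : structure S) : NoAlg2 M -> NoAlg M.
Proof.
  intros H ys a l Hna. destruct (remove_ex l a) as [l' Hl'].
  destruct (H (ys ++ l') a) as [h [He [Hs [Hf Hn]]]].
  { intro Hin. apply in_app_or in Hin as [Hin|Hin]; [contradiction|]. apply Hl' in Hin as [_ ?]; auto. }
  exists h. split; [|split; [|split]]; auto.
  - intros y Hy. apply Hf. apply in_or_app; auto.
  - intro Hin. apply Hn. destruct (excluded_middle_informative (h a = a)) as [E|E]; [left; auto|].
    right. apply in_or_app; right. apply Hl'; auto.
Qed.

Lemma NoAlg2_from_ext {S} (Kp : str_class S) (Mp : structure S) :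
  fraisse_limit Kp Mp ->
  (forall A : structure S, Kp A -> forall a0 : dom A, exists (D : structure S) e1 e2,
      Kp D /\ is_emb A D e1 /\ is_emb A D e2 /\ (forall t, t <> a0 -> e1 t = e2 t) /\
      (forall t, e1 t <> e2 a0)) ->
  NoAlg2 Mp.
Proof.
  intros [Hws [_ [Hage Hhom]]] Hext ys a Hna.
  set (A := subT Mp (a :: ys)).
  assert (KA : Kp A).
  { apply Hage. split; [apply subT_finite|split; [apply subT_ws; auto|]]. exists (@proj1_sig _ _). apply subT_emb. }
  set (a0 := exist (fun y => In y (a :: ys)) a (in_eq a ys) : dom A).
  destruct (Hext A KA a0) as [D [e1 [e2 [KD [He1 [He2 [Heq Hne]]]]]]].
  apply Hage in KD as [FD [WD [G HG]]].
  destruct (Hhom A (fun t => G (e1 t)) (@proj1_sig _ _) (subT_finite _ _) (emb_comp He1 HG) (subT_emb _ _))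
    as [h0 [Hh0 [Hs0 Hh0e]]].
  pose proof (emb_comp HG Hh0) as HG'. simpl in HG'.
  destruct (Hhom A (@proj1_sig _ _) (fun t => h0 (G (e2 t))) (subT_finite _ _) (subT_emb _ _) (emb_comp He2 HG'))
    as [h [Hh [Hs Hhe]]].
  exists h. split; [auto|split; [auto|split]].
  - intros y Hy. set (t := exist (fun y => In y (a :: ys)) y (in_cons a y ys Hy) : dom A).
    change y with (proj1_sig t). rewrite Hhe. rewrite <- Heq. apply Hh0e.
    intro E. apply Hna. apply (f_equal (@proj1_sig _ _)) in E. simpl in E. subst; auto.
  - intro Hin. change a with (proj1_sig a0) in Hin. rewrite Hhe in Hin.
    set (t := exist (fun y => In y (a :: ys)) _ Hin : dom A).
    apply (Hne t). destruct HG' as [Hi _]. apply Hi. rewrite Hh0e. reflexivity.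
Qed.

Definition nr {ar} (r : Lrel ar) := nth (proj1_sig r) ar 0.

Definition allrels (ar : list nat) : list (Lrel ar) :=
  flat_map (fun i => match lt_dec i (length ar) with left h => [exist _ i h] | right _ => [] end) (seq 0 (length ar)).

Lemma allrels_complete ar (r : Lrel ar) : In r (allrels ar).
Proof.
  destruct r as [i h]. unfold allrels. apply in_flat_map. exists i. split; [apply in_seq; simpl; lia|].
  destruct (lt_dec i (length ar)) as [h'|n]; [|contradiction]. left. f_equal. apply proof_irrelevance.
Qed.

Fixpoint tuples (n : nat) (vs : list nat) : list (list nat) :=
  match n with 0 => [[]] | S n => flat_map (fun j => map (cons j) (tuples n vs)) vs end.

Lemma tuples_spec n vs : forall t, In t (tuples n vs) <-> length t = n /\ incl t vs.
Proof.
  induction n; intro t; simpl.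
  - split.
    + intros [<-|[]]. split; auto. intros x [].
    + intros [H _]. destruct t; [left; auto|discriminate].
  - rewrite in_flat_map. split.
    + intros [j [Hj Ht]]. apply in_map_iff in Ht as [t' [<- Ht']]. apply IHn in Ht' as [H1 H2].
      split; simpl; auto. intros x [<-|Hx]; auto.
    + intros [H1 H2]. destruct t as [|j t]; [discriminate|]. exists j. split; [apply H2; left; auto|].
      apply in_map. apply IHn. split; [simpl in H1; lia|]. intros x Hx; apply H2; right; auto.
Qed.

Lemma ws_len {ar} (M : structure (Lsig ar)) : wellsorted M -> forall r l, interp M r l -> length l = nr r.
Proof. intros H r l Hl. apply H in Hl. apply (f_equal (@length _)) in Hl. rewrite length_map in Hl.
  simpl in Hl. rewrite repeat_length in Hl. auto. Qed.

Lemma upd_id {T} (v : nat -> T) i : upd v i (v i) = v.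
Proof. extensionality j. unfold upd. destruct (Nat.eqb j i) eqn:E; auto. apply Nat.eqb_eq in E; subst; auto. Qed.

Lemma forall2_exists {A B} (R : A -> B -> Prop) : (forall b, exists a, R a b) -> forall l, exists l', Forall2 R l' l.
Proof. intros H l. induction l as [|b l [l' IH]]; [exists []; constructor|]. destruct (H b) as [a Ha]. exists (a :: l'); constructor; auto. Qed.

Lemma one_more ar (M : structure (Lsig ar)) (F : structure (Lsig ar)) (phi : dom F -> dom M) (t0 : dom F) :
  finite_str F -> is_emb F M phi -> wellsorted M -> trivial_acl M ->
  exists c, (forall t, phi t <> c) /\
    forall r ts, interp M r (map phi ts) <->
      interp M r (map (fun t => if excluded_middle_informative (t = t0) then c else phi t) ts).
Proof.
  intros [lF HlF] [Hinj [_ Hrel]] HwM HT.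
  set (dec := fun x y : dom F => excluded_middle_informative (x = y)).
  set (os := nodup dec lF).
  assert (Hos : forall t, In t os) by (intro t; apply nodup_In; auto).
  assert (Hnd : NoDup os) by apply NoDup_nodup.
  set (n := length os).
  destruct (In_nth os t0 t0 (Hos t0)) as [j0 [Hj0 Hj0e]].
  assert (Hidx : forall t, exists j, j < n /\ nth j os t0 = t)
    by (intro t; destruct (In_nth os t t0 (Hos t)) as [j [? ?]]; eauto).
  assert (Huniq : forall i j, i < n -> j < n -> nth i os t0 = nth j os t0 -> i = j)
    by (apply NoDup_nth; auto).
  set (w := fun j => phi (nth j os t0)).
  set (vs := seq 0 n).
  set (lit := fun (r : Lrel ar) t => if excluded_middle_informative (interp M r (map w t))
     then @FRel (Lsig ar) r t else FNot (@FRel (Lsig ar) r t)).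
  set (theta := FAnd (bigAnd (map (fun j => @FNot (Lsig ar) (FEq j0 j)) (filter (fun j => negb (Nat.eqb j j0)) vs)))
                     (bigAnd (flat_map (fun r => map (lit r) (tuples (nr r) vs)) (allrels ar)))).
  assert (Hlit : forall v r t, sat M v (lit r t) -> (interp M r (map v t) <-> interp M r (map w t))).
  { intros v r t. unfold lit. destruct (excluded_middle_informative _); simpl; tauto. }
  assert (Hlitw : forall r t, sat M w (lit r t)).
  { intros r t. unfold lit. destruct (excluded_middle_informative _); simpl; auto. }
  assert (Hsatw : sat M w theta).
  { split.
    - apply sat_bigAnd. rewrite Forall_map, Forall_forall. intros j Hj. simpl. unfold w. intro E.
      apply filter_In in Hj as [Hj Hjj]. apply in_seq in Hj. apply Hinj in E. apply Huniq in E; try lia.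
      subst. rewrite Nat.eqb_refl in Hjj; discriminate.
    - apply sat_bigAnd. rewrite Forall_forall. intros f Hf. apply in_flat_map in Hf as [r [_ Hf]].
      apply in_map_iff in Hf as [t [<- _]]. apply Hlitw. }
  assert (Hfv : forall j, In j (fv theta) -> j < n).
  { intros j Hj. simpl in Hj. apply in_app_or in Hj as [Hj|Hj]; apply fv_bigAnd in Hj as [f [Hf Hj]].
    - apply in_map_iff in Hf as [i [<- Hi]]. apply filter_In in Hi as [Hi _]. apply in_seq in Hi.
      simpl in Hj. destruct Hj as [<-|[<-|[]]]; lia.
    - apply in_flat_map in Hf as [r [_ Hf]]. apply in_map_iff in Hf as [t [<- Ht]].
      apply tuples_spec in Ht as [_ Ht].
      assert (Hjt : In j t) by (unfold lit in Hj; destruct (excluded_middle_informative _); simpl in Hj; auto).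
      apply Ht in Hjt. apply in_seq in Hjt. lia. }
  assert (Hnf : ~ finite_set (fun c => srt M c = srt M (w j0) /\ sat M (upd w j0 c) theta)).
  { intro Hf. assert (Hacl : acl M (fun m => exists t, t <> t0 /\ phi t = m) (w j0)).
    { exists theta, j0, w. split; [|split; [rewrite upd_id; auto| auto]].
      intros j Hj Hjj. exists (nth j os t0). split; [|auto]. intro E. assert (E2 : nth j os t0 = nth j0 os t0) by congruence.
      apply Huniq in E2; auto. }
    assert (HMM : model_of_Th M M) by (split; [auto|split; [constructor; exact (phi t0)| tauto]]).
    apply (HT M HMM) in Hacl as [t [Ht E]]. unfold w in E. rewrite Hj0e in E. apply Hinj in E. contradiction. }
  assert (Hc : exists c, srt M c = srt M (w j0) /\ sat M (upd w j0 c) theta /\ c <> w j0).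
  { apply NNPP. intro Hn. apply Hnf. exists [w j0]. intros c Hc. left. apply NNPP. intro E. apply Hn.
    exists c. split; [tauto|split; [tauto|]]. intro E'; apply E; auto. }
  destruct Hc as [c [_ [[Hc1 Hc2] Hc3]]].
  exists c. split.
  - intros t E. destruct (Hidx t) as [j [Hj <-]].
    destruct (Nat.eq_dec j j0) as [->|Hjj]; [apply Hc3; auto|].
    apply sat_bigAnd in Hc1. rewrite Forall_map, Forall_forall in Hc1.
    apply (Hc1 j).
    { apply filter_In. split. apply in_seq; lia. apply Nat.eqb_neq in Hjj; rewrite Hjj; auto. }
    simpl. rewrite upd_same, upd_other by auto. unfold w. auto.
  - intros r ts.
    destruct (forall2_exists _ Hidx ts) as [js Hjs].
    assert (Hlen : length js = length ts) by (eapply Forall2_length; eauto).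
    assert (Hincl : incl js vs).
    { clear -Hjs. induction Hjs; [intros x []|]. intros z [<-|Hz]; [apply in_seq; simpl; lia|auto]. }
    assert (Hmw : map w js = map phi ts).
    { clear -Hjs. induction Hjs as [|j t js ts [_ H] _ IH]; simpl; auto. rewrite IH. unfold w; rewrite H; auto. }
    assert (Hmc : map (upd w j0 c) js = map (fun t => if excluded_middle_informative (t = t0) then c else phi t) ts).
    { clear -Hjs Huniq Hj0 Hj0e. induction Hjs as [|j t js ts [Hj H] _ IH]; simpl; auto. rewrite IH. f_equal.
      destruct (excluded_middle_informative (t = t0)) as [E|E].
      - rewrite E in H. assert (E2 : nth j os t0 = nth j0 os t0) by congruence.
        apply Huniq in E2; auto. rewrite E2. apply upd_same.
      - rewrite upd_other. unfold w; rewrite H; auto. intro E3. apply E. rewrite <- H, E3; auto. }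
    destruct (Nat.eq_dec (length ts) (nr r)) as [Hl|Hl].
    2: { split; intro H; apply (ws_len HwM) in H; rewrite length_map in H; contradiction. }
    rewrite <- Hmw, <- Hmc. symmetry. apply Hlit.
    apply sat_bigAnd in Hc2. rewrite Forall_forall in Hc2. apply Hc2.
    apply in_flat_map. exists r. split; [apply allrels_complete|]. apply in_map. apply tuples_spec. split; auto. lia.
Qed.

Lemma geometric_from_trivial {Sg} (Mp : structure Sg) : trivial_acl Mp -> geometric Mp.
Proof.
  intro HT. split.
  - intros phi x s. exists (length (fv phi)). intros N HN v sol.
    destruct (classic (finite_set sol)) as [Hf|Hf]; [right|left; auto].
    exists (map v (fv phi)). rewrite length_map. split; auto.
    intros c Hc. 
    assert (H : acl N (fun y => exists j, In j (fv phi) /\ j <> x /\ y = v j) c).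
    { exists phi, x, v. split; [|split].
      - intros j Hj Hjx. eauto.
      - apply Hc.
      - destruct Hf as [l Hl]. exists l. intros c' [Hc' Hs]. apply Hl. split; auto.
        destruct Hc as [Hc _]. congruence. }
    apply (HT N HN) in H as [j [Hj [_ ->]]]. apply in_map; auto.
  - intros N HN X a b Hab Hna.
    apply (HT N HN) in Hab as [Ha| ->].
    + exfalso. apply Hna. apply acl_self; auto.
    + apply acl_self; auto.
Qed.

Lemma map_repeat_forall {A B} (f : A -> B) c : forall l n, map f l = repeat c n -> Forall (fun x => f x = c) l /\ length l = n.
Proof. induction l; intros [|n] H; simpl in *; try discriminate; auto.
  injection H as H1 H2. apply IHl in H2 as [? ?]. split; auto. Qed.

Lemma forall_map_repeat {A B} (f : A -> B) c l : Forall (fun x => f x = c) l -> map f l = repeat c (length l).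
Proof. induction 1; simpl; congruence. Qed.

Lemma forall_sig {T} (P : T -> Prop) ts : Forall P ts -> exists sts : list {t | P t}, map (@proj1_sig _ _) sts = ts.
Proof. induction 1 as [|x l Hx _ [sts IH]]; [exists []; auto|]. exists (exist P x Hx :: sts); simpl; congruence. Qed.

Lemma ws_pfc {ar} (N : structure (Lpfc ar)) : wellsorted N -> forall r l, interp N r l ->
  exists t0 ts, l = t0 :: ts /\ srt N t0 = SP /\ Forall (fun t => srt N t = SO) ts /\ length ts = nr r.
Proof.
  intros H r l Hl. apply H in Hl. destruct l as [|t0 ts]; [discriminate|]. simpl in Hl.
  injection Hl as H1 H2. apply map_repeat_forall in H2 as [? ?]. exists t0, ts. auto.
Qed.

Lemma fiber_ws {ar} (N : structure (Lpfc ar)) b : wellsorted N -> wellsorted (fiber N b).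
Proof.
  intros H r ls Hr. simpl in Hr. apply (ws_pfc H) in Hr as [t0 [ts [E [_ [_ Hl]]]]].
  injection E as _ E. change (map (fun _ => tt) ls = repeat tt (nr r)).
  transitivity (repeat tt (length ls)).
  - apply forall_map_repeat. apply Forall_forall. intros. reflexivity.
  - f_equal. rewrite <- Hl, <- E, length_map. auto.
Qed.

Lemma fiber_finite {ar} (N : structure (Lpfc ar)) b : finite_str N -> finite_str (fiber N b).
Proof. intros [l Hl]. apply (finite_sig (fun a => srt N a = SO) l). auto. Qed.

Lemma K_pfc_intro {ar} (K : str_class (Lsig ar)) (N : structure (Lpfc ar)) :
  finite_str N -> wellsorted N -> (forall b, srt N b = SP -> K (fiber N b)) -> K_pfc K N.
Proof.
  intros HF HW HK. split; [auto|split; [auto|]]. intros b Hb. exists (fiber N b). split; auto.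
  exists (fun x => x). split; [apply emb_id|]. intro y; exists y; auto.
Qed.

Section Ext.
Variable ar : list nat.
Variable A : structure (Lpfc ar).
Variable a0 : dom A.

Definition DT := (dom A + unit)%type.
Definition pi (d : DT) : dom A := match d with inl t => t | inr _ => a0 end.
Definition e2 (t : dom A) : DT := if excluded_middle_informative (t = a0) then inr tt else inl t.
Lemma pi_e2 t : pi (e2 t) = t.
Proof. unfold e2. destruct (excluded_middle_informative (t = a0)); simpl; auto. Qed.
Definition mkD (I : Lrel ar -> list DT -> Prop) : structure (Lpfc ar) := @Structure (Lpfc ar) DT (fun d => srt A (pi d)) I.

Lemma mkD_finite I : finite_str A -> finite_str (mkD I).
Proof. intros [l Hl]. exists (inr tt :: map inl l). intros [t|[]]; [right; apply in_map; auto|left; auto]. Qed.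

Lemma mkD_emb I (e : dom A -> DT) : (forall t, pi (e t) = t) ->
  (forall r l, interp A r l <-> I r (map e l)) -> is_emb A (mkD I) e.
Proof.
  intros He HI. split; [|split].
  - intros x y E. rewrite <- (He x), <- (He y), E. auto.
  - intro a. simpl. rewrite He. auto.
  - exact HI.
Qed.

Lemma e1_e2 t : t <> a0 -> inl t = e2 t.
Proof. intro H. unfold e2. destruct (excluded_middle_informative (t = a0)); [contradiction|auto]. Qed.
Lemma e1_ne t : inl t <> e2 a0.
Proof. unfold e2. destruct (excluded_middle_informative (a0 = a0)); [discriminate|tauto]. Qed.

End Ext.


Lemma ext_P ar (K : str_class (Lsig ar)) (A : structure (Lpfc ar)) (a0 : dom A) :
  HP K -> K_pfc K A -> srt A a0 = SP ->
  exists D e1 e2, K_pfc K D /\ is_emb A D e1 /\ is_emb A D e2 /\ (forall t, t <> a0 -> e1 t = e2 t) /\ (forall t, e1 t <> e2 a0).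
Proof.
  intros HHP [HF [HW HK]] Ha0.
  set (I := fun r (l : list (DT A)) => interp A r (map (pi a0) l)).
  exists (mkD a0 I), inl, (e2 A a0).
  split; [|split; [|split; [|split]]].
  - apply K_pfc_intro.
    + apply mkD_finite; auto.
    + intros r l Hr. simpl. unfold I in Hr. apply HW in Hr. rewrite map_map in Hr. exact Hr.
    + intros d Hd. destruct (HK (pi a0 d) Hd) as [B [KB [f [Hf _]]]].
      apply (HHP _ B); auto.
      set (g := fun x : dom (fiber (mkD a0 I) d) => exist (fun t => srt A t = SO) (pi a0 (proj1_sig x)) (proj2_sig x) : dom (fiber A (pi a0 d))).
      exists (fun x => f (g x)). apply emb_comp with (B := fiber A (pi a0 d)); auto.
      split; [|split].
      * intros [x hx] [y hy] E. unfold g in E; simpl in E. injection E as E.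
        destruct x as [x|[]]; destruct y as [y|[]]; simpl in *; try congruence.
        subst. f_equal. apply proof_irrelevance.
      * intros; reflexivity.
      * intros r ls. simpl. unfold I. simpl. rewrite !map_map. tauto.
  - apply mkD_emb; auto. intros r l. unfold I. rewrite map_map. simpl. rewrite map_id. tauto.
  - apply mkD_emb; [apply pi_e2|]. intros r l. unfold I. rewrite map_map. rewrite (map_ext _ _ (pi_e2 A a0)), map_id. tauto.
  - apply e1_e2.
  - apply e1_ne.
Qed.

Lemma sig_irr {T} (P : T -> Prop) x (h h' : P x) : exist P x h = exist P x h'.
Proof. f_equal. apply proof_irrelevance. Qed.

Lemma ext_O ar (K : str_class (Lsig ar)) (M : structure (Lsig ar)) (A : structure (Lpfc ar)) (a0 : dom A) :
  (forall X, K X <-> finite_str X /\ wellsorted X /\ embeds X M) -> wellsorted M -> trivial_acl M ->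
  K_pfc K A -> srt A a0 = SO ->
  exists D e1 e2, K_pfc K D /\ is_emb A D e1 /\ is_emb A D e2 /\ (forall t, t <> a0 -> e1 t = e2 t) /\ (forall t, e1 t <> e2 a0).
Proof.
  intros Hage HwM HT [HF [HW HK]] Ha0.
  set (good := fun (p : dom A) (psi : DT A -> dom M) =>
    (forall x y, srt A (pi a0 x) = SO -> srt A (pi a0 y) = SO -> psi x = psi y -> x = y) /\
    (forall r ts, Forall (fun t => srt A t = SO) ts ->
       (interp A r (p :: ts) <-> interp M r (map psi (map inl ts))) /\
       (interp A r (p :: ts) <-> interp M r (map psi (map (e2 A a0) ts))))).
  assert (Hgood : forall P : {p | srt A p = SP}, exists psi, good (proj1_sig P) psi).
  { intros [p Hp]. simpl.
    destruct (HK p Hp) as [B [KB [f [Hf _]]]].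
    apply Hage in KB as [_ [_ [g Hg]]].
    pose proof (emb_comp Hf Hg) as Hphi. set (phi := fun x => g (f x)) in Hphi.
    set (a0s := exist (fun t => srt A t = SO) a0 Ha0 : dom (fiber A p)).
    destruct (@one_more ar M (fiber A p) phi a0s (fiber_finite p HF) Hphi HwM HT) as [c [Hc1 Hc2]].
    set (psi := fun d : DT A => match d with
        | inl t => match excluded_middle_informative (srt A t = SO) with
                   | left h => phi (exist _ t h) | right _ => c end
        | inr _ => c end).
    assert (Hpsi : forall t (h : srt A t = SO), psi (inl t) = phi (exist _ t h)).
    { intros t h. unfold psi. destruct (excluded_middle_informative (srt A t = SO)) as [h'|]; [|contradiction].
      rewrite (@sig_irr _ (fun a => srt A a = SO) t h' h). reflexivity. }
    exists psi. split.
    - intros [x|[]] [y|[]] Hx Hy E; simpl in Hx, Hy; auto.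
      + rewrite (Hpsi x Hx), (Hpsi y Hy) in E.
        destruct Hphi as [Hi _]. apply Hi in E. injection E as E. subst; auto.
      + rewrite (Hpsi x Hx) in E. exfalso; eapply Hc1; eauto.
      + rewrite (Hpsi y Hy) in E. exfalso; eapply Hc1; eauto.
    - intros r ts Hts. destruct (forall_sig Hts) as [sts <-].
      assert (H0 : interp A r (p :: map (@proj1_sig _ _) sts) <-> interp M r (map phi sts)).
      { destruct Hphi as [_ [_ Hr]]. rewrite <- Hr. simpl. tauto. }
      split.
      + rewrite H0. enough (Em : map psi (map inl (map (@proj1_sig _ _) sts)) = map phi sts) by (rewrite Em; tauto).
        rewrite !map_map. apply map_ext_in.
        intros [t ht] _. exact (Hpsi t ht).
      + rewrite H0, Hc2.
        enough (Em : map psi (map (e2 A a0) (map (@proj1_sig _ _) sts)) =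
           map (fun t => if excluded_middle_informative (t = a0s) then c else phi t) sts) by (rewrite Em; tauto).
        rewrite !map_map. apply map_ext_in.
        intros [t ht] _. simpl. unfold e2. destruct (excluded_middle_informative (t = a0)) as [E|E].
        * assert (Ea : exist (fun a => srt A a = SO) t ht = a0s) by (unfold a0s; subst; apply sig_irr).
          destruct (excluded_middle_informative _) as [_|n]; [reflexivity|contradiction].
        * rewrite (Hpsi t ht).
          destruct (excluded_middle_informative _) as [E'|_]; [|reflexivity].
          exfalso. apply E. apply (f_equal (@proj1_sig _ _)) in E'. auto. }
  destruct (choice (fun P psi => good (proj1_sig P) psi) Hgood) as [Fn HFn].
  set (I := fun r (l : list (DT A)) => match l with
     | d0 :: ds => Forall (fun d => srt A (pi a0 d) = SO) ds /\
         exists H : srt A (pi a0 d0) = SP, interp M r (map (Fn (exist _ (pi a0 d0) H)) ds)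
     | [] => False end).
  assert (Firr : forall P Q, proj1_sig P = proj1_sig Q -> Fn P = Fn Q).
  { intros [p Hp] [q Hq] E. simpl in E. subst. f_equal. f_equal. apply proof_irrelevance. }
  assert (Hemb : forall e, (forall t, pi a0 (e t) = t) ->
     (forall (P : {p | srt A p = SP}) r ts, Forall (fun t => srt A t = SO) ts ->
         (interp A r (proj1_sig P :: ts) <-> interp M r (map (Fn P) (map e ts)))) ->
     is_emb A (mkD a0 I) e).
  { intros e He Hc. apply mkD_emb; auto. intros r l. split.
    - intro Hr. destruct (ws_pfc HW _ _ Hr) as [t0 [ts [-> [Ht0 [Hts _]]]]]. simpl. split.
      + rewrite Forall_map. eapply Forall_impl; [|exact Hts]. intros t Ht. rewrite He; auto.
      + assert (H' : srt A (pi a0 (e t0)) = SP) by (rewrite He; auto). exists H'.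
        match goal with |- context [Fn ?X] => rewrite (Firr X (exist _ t0 Ht0) (He t0)) end. apply (Hc (exist _ t0 Ht0)); auto.
    - destruct l as [|t0 ts]; simpl; [tauto|]. intros [Hts [H' Hr]].
      rewrite Forall_map in Hts. assert (Ht0 : srt A t0 = SP) by (rewrite <- (He t0); auto).
      match type of Hr with context [Fn ?X] => rewrite (Firr X (exist _ t0 Ht0) (He t0)) in Hr end. apply (Hc (exist _ t0 Ht0)); auto.
      eapply Forall_impl; [|exact Hts]. intros t Ht. pose proof (He t) as Ee. simpl in Ht. congruence. }
  assert (HwD : wellsorted (mkD a0 I)).
  { intros r [|d0 ds] Hr; [destruct Hr|]. destruct Hr as [Hds [H Hr]].
    apply (ws_len HwM) in Hr. rewrite length_map in Hr.
    change (srt A (pi a0 d0) :: map (fun d => srt A (pi a0 d)) ds = SP :: repeat SO (nr r)).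
    rewrite H, (@forall_map_repeat _ _ (fun d => srt A (pi a0 d)) SO ds Hds). rewrite Hr. auto. }
  exists (mkD a0 I), inl, (e2 A a0).
  split; [|split; [|split; [|split]]].
  - apply K_pfc_intro; auto.
    + apply mkD_finite; auto.
    + intros d Hd. apply Hage. split; [apply fiber_finite, mkD_finite; auto|split; [apply fiber_ws; auto|]].
      exists (fun x => Fn (exist _ (pi a0 d) Hd) (proj1_sig x)). split; [|split].
      * intros [x hx] [y hy] E. simpl in E. apply (proj1 (HFn _)) in E; auto. subst; f_equal; apply proof_irrelevance.
      * intros. simpl. destruct (srt M _); reflexivity.
      * intros r ls. simpl. split.
        -- intros [_ [H Hr]]. rewrite map_map in Hr. match type of Hr with context [Fn ?X] => rewrite (Firr X (exist _ (pi a0 d) Hd) eq_refl) in Hr end. exact Hr.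
        -- intros Hr. split.
           ++ rewrite Forall_map. apply Forall_forall. intros [x hx] _. auto.
           ++ exists Hd. rewrite map_map in *; auto.
  - apply Hemb; [reflexivity|]. intros P r ts Hts. apply (proj2 (HFn P) r ts Hts).
  - apply Hemb; [apply pi_e2|]. intros P r ts Hts. apply (proj2 (HFn P) r ts Hts).
  - apply e1_e2.
  - apply e1_ne.
Qed.

Theorem corollary4p8 (ar : list nat) (K : str_class (Lsig ar))
  (M : structure (Lsig ar)) :
  fraisse_class K -> SAP K -> fraisse_limit K M ->
  geometric M -> trivial_acl M ->
  forall Mp : structure (Lpfc ar), fraisse_limit (K_pfc K) Mp ->
    geometric Mp /\ trivial_acl Mp.
Proof.
  intros [_ [_ [HHP _]]] _ [HwM [_ [Hage _]]] _ HT Mp HMp.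
  assert (HN : NoAlg Mp).
  { apply NoAlg_from2. apply (NoAlg2_from_ext HMp).
    intros A KA a0. destruct (srt A a0) eqn:E.
    - apply (@ext_O ar K M A a0 Hage HwM HT KA E).
    - apply (@ext_P ar K A a0 HHP KA E). }
  assert (HTp := trivial_from_noalg HN).
  split; [apply geometric_from_trivial|]; auto.
Qed.
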